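(* $\mathsf d\otimes\mathsf I\mathrel{;}\mathsf I\otimes\mathsf e\ \sim\ \mathsf I\ \sim\ \mathsf I\otimes\mathsf d\mathrel{;}\mathsf e\otimes\mathsf I$, where $\otimes$ binds tighter than $;$.
   Context: Wire calculus. Fix a set $\Sigma$ of signals and $\iota\notin\Sigma$; $L=\Sigma\cup\{\iota\}$; $\vec\iota$ denotes a word of $\iota$'s. Prefix strings are words over atoms: signal variables $x$, binders $\lambda x$, $\iota$, constants $\sigma\in\Sigma$. Terms: $P::= Y \mid P\mathrel{;}P\mid P\otimes P\mid \frac{u}{v}.P\mid P+P\mid \mu Y{:}\tau.P$ ($\tau$ a sort $(k,l)$). In $\frac{u}{v}.P$, variables $x$ with $\lambda x$ in $uv$ are bound (set $bd$). Sorting: $P:(k,n),R:(n,l)\Rightarrow P\mathrel{;}R:(k,l)$; $P:(k,l),Q:(m,n)\Rightarrow P\otimes Q:(k+m,l+n)$; $\frac{u}{v}.P:(|u|,|v|)$ when $P$ has that sort; $\mu Y{:}\tau.P:\tau$; $P+Q:\tau$ for $P,Q:\tau$. Closed terms only. Transitions $P\xrightarrow[\vec b]{\vec a}Q$ are generated by: (Refl) $P\xrightarrow[\vec\iota]{\vec\iota}P$; ($\iota$L) $P\xrightarrow[\vec\iota]{\vec\iota}R\xrightarrow[\vec b]{\vec a}Q$ gives $P\xrightarrow[\vec b]{\vec a}Q$; ($\iota$R) $P\xrightarrow[\vec b]{\vec a}R\xrightarrow[\vec\iota]{\vec\iota}Q$ gives $P\xrightarrow[\vec b]{\vec a}Q$;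 (Cut) $P\xrightarrow[\vec c]{\vec a}Q$, $R\xrightarrow[\vec b]{\vec c}S$ give $P\mathrel{;}R\xrightarrow[\vec b]{\vec a}Q\mathrel{;}S$; (Ten) $P\xrightarrow[\vec b]{\vec a}Q$, $R\xrightarrow[\vec d]{\vec c}S$ give $P\otimes R\xrightarrow[\vec b\vec d]{\vec a\vec c}Q\otimes S$; (Pref) for each $\sigma:bd\to L$, $\frac{u}{v}.P\xrightarrow[v|_\sigma]{u|_\sigma}P|_\sigma$; (Rec) $P[\mu Y.P/Y]\xrightarrow[\vec b]{\vec a}Q$ gives $\mu Y.P\xrightarrow[\vec b]{\vec a}Q$; ($+\iota$) and ($+$L/R) as in CSP external choice (choice resolved only by a transition whose labels are not all $\iota$). Bisimilarity $\sim$: $P\sim Q$ iff some relation $S\ni(P,Q)$ satisfies: if $(P',Q')\in S$ and $P'\xrightarrow[\vec b]{\vec a}P''$ then $Q'\xrightarrow[\vec b]{\vec a}Q''$ with $(P'',Q'')\in S$, and symmetrically. Constants: $\mathsf I=\mu Y.\frac{\lambda x}{\lambda x}.Y:(1,1)$ (transitions $\mathsf I\xrightarrow[a]{a}\mathsf I$ for $a\in L$); $\mathsf d=\mu Y.\frac{\epsilon}{\lambda x\lambda x}.Y:(0,2)$ (transitions $\mathsf d\xrightarrow[aa]{}\mathsf d$); $\mathsf e=\mu Y.\frac{\lambda x\lambda x}{\epsilon}.Y:(2,0)$ (transitions $\mathsf e\xrightarrow[]{aa}\mathsf e$), $\epsilon$ the empty string. *)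

(* Defs.v *)
From Stdlib Require Import List Arith Bool.
Import ListNotations.
Set Implicit Arguments.

Section Wire.
Variable Sigma : Type.

(* L = Sigma ∪ {ι};  None plays the role of ι *)
Definition lab := option Sigma.
Definition iota : lab := None.
Definition iotas (n : nat) : list lab := repeat iota n.

Inductive atom : Type :=
| AVar  : nat -> atom
| ALam  : nat -> atom
| AIota : atom
| AConst : Sigma -> atom.

Definition sort := (nat * nat)%type.

Inductive term : Type :=
| TVar : nat -> term
| Seq  : term -> term -> term
| Ten  : term -> term -> term
| Pref : list atom -> list atom -> term -> term
| Plus : term -> term -> term
| Mu   : nat -> sort -> term -> term.

Fixpoint binders (w : list atom) : list nat :=
  match w with
  | [] => []
  | ALam x :: w' => x :: binders w'
  | _ :: w' => binders w'
  end.
Definition bd (u v : list atom) : list nat := binders (u ++ v).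

Definition memb (x : nat) (l : list nat) : bool := existsb (Nat.eqb x) l.

Definition atom_of_lab (a : lab) : atom :=
  match a with Some c => AConst c | None => AIota end.

Definition subst_atom (s : nat -> option lab) (a : atom) : atom :=
  match a with
  | AVar x => match s x with Some l => atom_of_lab l | None => AVar x end
  | _ => a
  end.

Fixpoint ssubst (s : nat -> option lab) (P : term) : term :=
  match P with
  | TVar Y => TVar Y
  | Seq P1 P2 => Seq (ssubst s P1) (ssubst s P2)
  | Ten P1 P2 => Ten (ssubst s P1) (ssubst s P2)
  | Pref u v P1 =>
      let s' := fun x => if memb x (bd u v) then None else s x in
      Pref (map (subst_atom s') u) (map (subst_atom s') v) (ssubst s' P1)
  | Plus P1 P2 => Plus (ssubst s P1) (ssubst s P2)
  | Mu Y t P1 => Mu Y t (ssubst s P1)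
  end.

(* P|_σ for σ : bd → L (given as a function on all variables, only its
   values on bd u v are used) *)
Definition restrict (u v : list atom) (sg : nat -> lab) : nat -> option lab :=
  fun x => if memb x (bd u v) then Some (sg x) else None.

Definition term_at (u v : list atom) (sg : nat -> lab) (P : term) : term :=
  ssubst (restrict u v sg) P.

Definition lab_of_atom (sg : nat -> lab) (a : atom) : lab :=
  match a with
  | AVar x => sg x
  | ALam x => sg x
  | AIota => iota
  | AConst c => Some c
  end.
Definition word_at (sg : nat -> lab) (w : list atom) : list lab :=
  map (lab_of_atom sg) w.

(* substitution of a (closed) term for a process variable *)
Fixpoint tsubst (Y : nat) (Q : term) (P : term) : term :=
  match P with
  | TVar Y' => if Nat.eqb Y' Y then Q else TVar Y'
  | Seq P1 P2 => Seq (tsubst Y Q P1) (tsubst Y Q P2)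
  | Ten P1 P2 => Ten (tsubst Y Q P1) (tsubst Y Q P2)
  | Pref u v P1 => Pref u v (tsubst Y Q P1)
  | Plus P1 P2 => Plus (tsubst Y Q P1) (tsubst Y Q P2)
  | Mu Y' t P1 => if Nat.eqb Y' Y then Mu Y' t P1 else Mu Y' t (tsubst Y Q P1)
  end.

Fixpoint lookup (G : list (nat * sort)) (Y : nat) : option sort :=
  match G with
  | [] => None
  | (Y', t) :: G' => if Nat.eqb Y Y' then Some t else lookup G' Y
  end.

Inductive has_sort : list (nat * sort) -> term -> sort -> Prop :=
| sort_var : forall G Y t, lookup G Y = Some t -> has_sort G (TVar Y) t
| sort_seq : forall G P R k n l,
    has_sort G P (k, n) -> has_sort G R (n, l) -> has_sort G (Seq P R) (k, l)
| sort_ten : forall G P Q k l m n,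
    has_sort G P (k, l) -> has_sort G Q (m, n) -> has_sort G (Ten P Q) (k + m, l + n)
| sort_pref : forall G u v P,
    has_sort G P (length u, length v) -> has_sort G (Pref u v P) (length u, length v)
| sort_plus : forall G P Q t,
    has_sort G P t -> has_sort G Q t -> has_sort G (Plus P Q) t
| sort_mu : forall G Y t P,
    has_sort ((Y, t) :: G) P t -> has_sort G (Mu Y t P) t.

Definition all_iota (w : list lab) : Prop := forall x, In x w -> x = iota.

(* labelled transitions  P --a/b--> Q  (a: left/top labels, b: right/bottom) *)
Inductive step : term -> list lab -> list lab -> term -> Prop :=
| st_refl : forall P k l, has_sort [] P (k, l) -> step P (iotas k) (iotas l) P
| st_iotaL : forall P R Q k l a b,
    step P (iotas k) (iotas l) R -> step R a b Q -> step P a b Q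
| st_iotaR : forall P R Q k l a b,
    step P a b R -> step R (iotas k) (iotas l) Q -> step P a b Q
| st_cut : forall P Q R S a b c,
    step P a c Q -> step R c b S -> step (Seq P R) a b (Seq Q S)
| st_ten : forall P Q R S a b c d,
    step P a b Q -> step R c d S -> step (Ten P R) (a ++ c) (b ++ d) (Ten Q S)
| st_pref : forall u v P (sg : nat -> lab),
    step (Pref u v P) (word_at sg u) (word_at sg v) (term_at u v sg P)
| st_rec : forall Y t P a b Q,
    step (tsubst Y (Mu Y t P) P) a b Q -> step (Mu Y t P) a b Q
| st_plus_iota : forall P P' Q Q' k l,
    step P (iotas k) (iotas l) P' -> step Q (iotas k) (iotas l) Q' ->
    step (Plus P Q) (iotas k) (iotas l) (Plus P' Q')
| st_plusL : forall P P' Q a b,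
    step P a b P' -> ~ all_iota (a ++ b) -> step (Plus P Q) a b P'
| st_plusR : forall P Q Q' a b,
    step Q a b Q' -> ~ all_iota (a ++ b) -> step (Plus P Q) a b Q'.

Definition bisimulation (S : term -> term -> Prop) : Prop :=
  forall P Q, S P Q ->
    (forall a b P', step P a b P' -> exists Q', step Q a b Q' /\ S P' Q') /\
    (forall a b Q', step Q a b Q' -> exists P', step P a b P' /\ S P' Q').

Definition bisim (P Q : term) : Prop :=
  exists S, S P Q /\ bisimulation S.

Definition tI : term := Mu 0 (1, 1) (Pref [ALam 0] [ALam 0] (TVar 0)).
Definition td : term := Mu 0 (0, 2) (Pref [] [ALam 0; ALam 0] (TVar 0)).
Definition te : term := Mu 0 (2, 0) (Pref [ALam 0; ALam 0] [] (TVar 0)).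

End Wire.

Arguments TVar {Sigma}.
Arguments tI {Sigma}.
Arguments td {Sigma}.
Arguments te {Sigma}.

(* Main.v *)
Require Import Defs.
From Stdlib Require Import List Arith Bool.
Import ListNotations.

Definition PI {Sigma : Type} : term Sigma := Pref [ALam Sigma 0] [ALam Sigma 0] tI.
Definition Pd {Sigma : Type} : term Sigma := Pref [] [ALam Sigma 0; ALam Sigma 0] td.
Definition Pe {Sigma : Type} : term Sigma := Pref [ALam Sigma 0; ALam Sigma 0] [] te.

Lemma step_eq (Sigma : Type) (P Q : term Sigma) a b a' b' :
  step P a b Q -> a = a' -> b = b' -> step P a' b' Q.
Proof. intros H -> ->; exact H. Qed.

Lemma iotas_all (Sigma : Type) (l : list (lab Sigma)) :
  (forall x, In x l -> x = None) -> l = iotas Sigma (length l).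
Proof.
  induction l as [|y l IH]; intros H; simpl; [reflexivity|].
  rewrite (H y (or_introl eq_refl)). unfold iotas in *; simpl. f_equal. apply IH. intros x Hx. apply H. right; exact Hx.
Qed.

Lemma iotas_app_l (Sigma : Type) (l1 l2 : list (lab Sigma)) k :
  l1 ++ l2 = iotas Sigma k -> l1 = iotas Sigma (length l1).
Proof.
  intros H. apply iotas_all. intros x Hx.
  assert (In x (iotas Sigma k)) as Hk by (rewrite <- H; apply in_or_app; left; exact Hx).
  unfold iotas in Hk. apply repeat_spec in Hk. exact Hk.
Qed.

Lemma iotas_app_r (Sigma : Type) (l1 l2 : list (lab Sigma)) k :
  l1 ++ l2 = iotas Sigma k -> l2 = iotas Sigma (length l2).
Proof.
  intros H. apply iotas_all. intros x Hx.
  assert (In x (iotas Sigma k)) as Hk by (rewrite <- H; apply in_or_app; right; exact Hx).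
  unfold iotas in Hk. apply repeat_spec in Hk. exact Hk.
Qed.

Lemma ten_dec (Sigma : Type) : forall (T : term Sigma) a b T', step T a b T' ->
  forall X0 Y0, T = Ten X0 Y0 -> exists a1 a2 b1 b2 X' Y',
    a = a1 ++ a2 /\ b = b1 ++ b2 /\ step X0 a1 b1 X' /\ step Y0 a2 b2 Y' /\ T' = Ten X' Y'.
Proof.
  induction 1; intros X0 Y0 HT; try discriminate.
  - subst. inversion H; subst.
    eexists _, _, _, _, X0, Y0.
    split; [unfold iotas; rewrite repeat_app; reflexivity|]. split; [unfold iotas; rewrite repeat_app; reflexivity|]. repeat split; try reflexivity; apply st_refl; eassumption.
  - destruct (IHstep1 X0 Y0 HT) as (a1 & a2 & b1 & b2 & X1 & Y1 & Ha & Hb & HX & HY & HR).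
    destruct (IHstep2 X1 Y1 HR) as (a1' & a2' & b1' & b2' & X' & Y' & Ha' & Hb' & HX' & HY' & HQ).
    exists a1', a2', b1', b2', X', Y'. repeat split; try assumption.
    + rewrite (iotas_app_l _ _ _ _ (eq_sym Ha)), (iotas_app_l _ _ _ _ (eq_sym Hb)) in HX.
      eapply st_iotaL; eassumption.
    + rewrite (iotas_app_r _ _ _ _ (eq_sym Ha)), (iotas_app_r _ _ _ _ (eq_sym Hb)) in HY.
      eapply st_iotaL; eassumption.
  - destruct (IHstep1 X0 Y0 HT) as (a1 & a2 & b1 & b2 & X1 & Y1 & Ha & Hb & HX & HY & HR).
    destruct (IHstep2 X1 Y1 HR) as (a1' & a2' & b1' & b2' & X' & Y' & Ha' & Hb' & HX' & HY' & HQ).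
    exists a1, a2, b1, b2, X', Y'. repeat split; try assumption.
    + rewrite (iotas_app_l _ _ _ _ (eq_sym Ha')), (iotas_app_l _ _ _ _ (eq_sym Hb')) in HX'.
      eapply st_iotaR; eassumption.
    + rewrite (iotas_app_r _ _ _ _ (eq_sym Ha')), (iotas_app_r _ _ _ _ (eq_sym Hb')) in HY'.
      eapply st_iotaR; eassumption.
  - injection HT; intros; subst. exists a, c, b, d, Q, S. repeat split; assumption.
Qed.

Lemma I_cl (Sigma : Type) : forall (P : term Sigma) a b Q, step P a b Q ->
  (P = tI \/ P = PI) -> exists x, a = [x] /\ b = [x] /\ (Q = tI \/ Q = PI).
Proof.
  induction 1; intros HP.
  - destruct HP; subst; inversion H; subst; exists None; auto.
  - destruct (IHstep1 HP) as [x [_ [_ HR]]]. apply IHstep2; exact HR.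
  - destruct (IHstep1 HP) as [x [Ha [Hb HR]]].
    destruct (IHstep2 HR) as [y [_ [_ HQ]]]. exists x; auto.
  - destruct HP; discriminate.
  - destruct HP; discriminate.
  - destruct HP as [HE|HE]; [discriminate|]. injection HE; intros; subst.
    exists (sg 0). split; [reflexivity|]. split; [reflexivity|]. left; reflexivity.
  - destruct HP as [HE|HE]; [|discriminate]. injection HE; intros; subst.
    apply IHstep. right; reflexivity.
  - destruct HP; discriminate.
  - destruct HP; discriminate.
  - destruct HP; discriminate.
Qed.

Lemma D_cl (Sigma : Type) : forall (P : term Sigma) a b Q, step P a b Q ->
  (P = td \/ P = Pd) -> exists x, a = [] /\ b = [x; x] /\ (Q = td \/ Q = Pd).
Proof.
  induction 1; intros HP.
  - destruct HP; subst; inversion H; subst; exists None; auto.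
  - destruct (IHstep1 HP) as [x [_ [_ HR]]]. apply IHstep2; exact HR.
  - destruct (IHstep1 HP) as [x [Ha [Hb HR]]].
    destruct (IHstep2 HR) as [y [_ [_ HQ]]]. exists x; auto.
  - destruct HP; discriminate.
  - destruct HP; discriminate.
  - destruct HP as [HE|HE]; [discriminate|]. injection HE; intros; subst.
    exists (sg 0). split; [reflexivity|]. split; [reflexivity|]. left; reflexivity.
  - destruct HP as [HE|HE]; [|discriminate]. injection HE; intros; subst.
    apply IHstep. right; reflexivity.
  - destruct HP; discriminate.
  - destruct HP; discriminate.
  - destruct HP; discriminate.
Qed.

Lemma E_cl (Sigma : Type) : forall (P : term Sigma) a b Q, step P a b Q ->
  (P = te \/ P = Pe) -> exists x, a = [x; x] /\ b = [] /\ (Q = te \/ Q = Pe).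
Proof.
  induction 1; intros HP.
  - destruct HP; subst; inversion H; subst; exists None; auto.
  - destruct (IHstep1 HP) as [x [_ [_ HR]]]. apply IHstep2; exact HR.
  - destruct (IHstep1 HP) as [x [Ha [Hb HR]]].
    destruct (IHstep2 HR) as [y [_ [_ HQ]]]. exists x; auto.
  - destruct HP; discriminate.
  - destruct HP; discriminate.
  - destruct HP as [HE|HE]; [discriminate|]. injection HE; intros; subst.
    exists (sg 0). split; [reflexivity|]. split; [reflexivity|]. left; reflexivity.
  - destruct HP as [HE|HE]; [|discriminate]. injection HE; intros; subst.
    apply IHstep. right; reflexivity.
  - destruct HP; discriminate.
  - destruct HP; discriminate.
  - destruct HP; discriminate.
Qed.

Lemma sort_ten_inv (Sigma : Type) G (X Y : term Sigma) k l :
  has_sort G (Ten X Y) (k, l) -> exists k1 l1 k2 l2,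
    has_sort G X (k1, l1) /\ has_sort G Y (k2, l2) /\ k = k1 + k2 /\ l = l1 + l2.
Proof. intros H; inversion H; subst; do 4 eexists; eauto. Qed.

Lemma sort_seq_inv (Sigma : Type) G (X Y : term Sigma) k l :
  has_sort G (Seq X Y) (k, l) -> exists n,
    has_sort G X (k, n) /\ has_sort G Y (n, l).
Proof. intros H; inversion H; subst; eauto. Qed.

Lemma sort_I (Sigma : Type) G (X : term Sigma) s :
  (X = tI \/ X = PI) -> has_sort G X s -> s = (1, 1).
Proof. intros [->| ->] H; inversion H; reflexivity. Qed.
Lemma sort_D (Sigma : Type) G (X : term Sigma) s :
  (X = td \/ X = Pd) -> has_sort G X s -> s = (0, 2).
Proof. intros [->| ->] H; inversion H; reflexivity. Qed.
Lemma sort_E (Sigma : Type) G (X : term Sigma) s :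
  (X = te \/ X = Pe) -> has_sort G X s -> s = (2, 0).
Proof. intros [->| ->] H; inversion H; reflexivity. Qed.

Definition AC1 {Sigma : Type} (P : term Sigma) : Prop :=
  exists D I1 I2 E, P = Seq (Ten D I1) (Ten I2 E) /\
    (D = td \/ D = Pd) /\ (I1 = tI \/ I1 = PI) /\ (I2 = tI \/ I2 = PI) /\ (E = te \/ E = Pe).

Definition AC2 {Sigma : Type} (P : term Sigma) : Prop :=
  exists I1 D E I2, P = Seq (Ten I1 D) (Ten E I2) /\
    (D = td \/ D = Pd) /\ (I1 = tI \/ I1 = PI) /\ (I2 = tI \/ I2 = PI) /\ (E = te \/ E = Pe).

Definition AI {Sigma : Type} (P : term Sigma) : Prop := P = tI \/ P = PI.

Lemma AC1_cl (Sigma : Type) : forall (P : term Sigma) a b Q, step P a b Q ->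
  AC1 P -> (exists x, a = [x] /\ b = [x]) /\ AC1 Q.
Proof.
  induction 1; intros HP.
  - split; [|exact HP].
    destruct HP as (D & I1 & I2 & E & -> & HD & HI1 & HI2 & HE).
    apply sort_seq_inv in H as (n & H1 & H2).
    apply sort_ten_inv in H1 as (k1 & l1 & k2 & l2 & S1 & S2 & -> & ->).
    apply sort_ten_inv in H2 as (k3 & l3 & k4 & l4 & S3 & S4 & E1 & ->).
    apply (sort_D _ _ _ _ HD) in S1. apply (sort_I _ _ _ _ HI1) in S2.
    apply (sort_I _ _ _ _ HI2) in S3. apply (sort_E _ _ _ _ HE) in S4.
    injection S1; injection S2; injection S3; injection S4; intros; subst.
    exists None; split; reflexivity.
  - destruct (IHstep1 HP) as [_ HR]. apply IHstep2; exact HR.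
  - destruct (IHstep1 HP) as [Hl HR]. destruct (IHstep2 HR) as [_ HQ]. auto.
  - destruct HP as (D & I1 & I2 & E & HE0 & HD & HI1 & HI2 & HE).
    injection HE0; intros; subst.
    destruct (ten_dec _ _ _ _ _ H _ _ eq_refl) as (a1 & a2 & b1 & b2 & D' & I1' & -> & -> & SD & SI1 & ->).
    destruct (ten_dec _ _ _ _ _ H0 _ _ eq_refl) as (a1' & a2' & b1' & b2' & I2' & E' & Hc & -> & SI2 & SE & ->).
    destruct (D_cl _ _ _ _ _ SD HD) as (x & -> & -> & HD').
    destruct (I_cl _ _ _ _ _ SI1 HI1) as (y & -> & -> & HI1').
    destruct (I_cl _ _ _ _ _ SI2 HI2) as (z & -> & -> & HI2').
    destruct (E_cl _ _ _ _ _ SE HE) as (w & -> & -> & HE').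
    simpl in Hc. injection Hc; intros; subst.
    split. { eexists; split; reflexivity. }
    exists D', I1', I2', E'; auto.
  - destruct HP as (D & I1 & I2 & E & HE0 & _); discriminate.
  - destruct HP as (D & I1 & I2 & E & HE0 & _); discriminate.
  - destruct HP as (D & I1 & I2 & E & HE0 & _); discriminate.
  - destruct HP as (D & I1 & I2 & E & HE0 & _); discriminate.
  - destruct HP as (D & I1 & I2 & E & HE0 & _); discriminate.
  - destruct HP as (D & I1 & I2 & E & HE0 & _); discriminate.
Qed.

Lemma AC2_cl (Sigma : Type) : forall (P : term Sigma) a b Q, step P a b Q ->
  AC2 P -> (exists x, a = [x] /\ b = [x]) /\ AC2 Q.
Proof.
  induction 1; intros HP.
  - split; [|exact HP].
    destruct HP as (I1 & D & E & I2 & -> & HD & HI1 & HI2 & HE).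
    apply sort_seq_inv in H as (n & H1 & H2).
    apply sort_ten_inv in H1 as (k1 & l1 & k2 & l2 & S1 & S2 & -> & ->).
    apply sort_ten_inv in H2 as (k3 & l3 & k4 & l4 & S3 & S4 & E1 & ->).
    apply (sort_I _ _ _ _ HI1) in S1. apply (sort_D _ _ _ _ HD) in S2.
    apply (sort_E _ _ _ _ HE) in S3. apply (sort_I _ _ _ _ HI2) in S4.
    injection S1; injection S2; injection S3; injection S4; intros; subst.
    exists None; split; reflexivity.
  - destruct (IHstep1 HP) as [_ HR]. apply IHstep2; exact HR.
  - destruct (IHstep1 HP) as [Hl HR]. destruct (IHstep2 HR) as [_ HQ]. auto.
  - destruct HP as (I1 & D & E & I2 & HE0 & HD & HI1 & HI2 & HE).
    injection HE0; intros; subst.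
    destruct (ten_dec _ _ _ _ _ H _ _ eq_refl) as (a1 & a2 & b1 & b2 & I1' & D' & -> & -> & SI1 & SD & ->).
    destruct (ten_dec _ _ _ _ _ H0 _ _ eq_refl) as (a1' & a2' & b1' & b2' & E' & I2' & Hc & -> & SE & SI2 & ->).
    destruct (D_cl _ _ _ _ _ SD HD) as (x & -> & -> & HD').
    destruct (I_cl _ _ _ _ _ SI1 HI1) as (y & -> & -> & HI1').
    destruct (I_cl _ _ _ _ _ SI2 HI2) as (z & -> & -> & HI2').
    destruct (E_cl _ _ _ _ _ SE HE) as (w & -> & -> & HE').
    simpl in Hc. injection Hc; intros; subst.
    split. { eexists; split; reflexivity. }
    exists I1', D', E', I2'; auto.
  - destruct HP as (D & I1 & I2 & E & HE0 & _); discriminate.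
  - destruct HP as (D & I1 & I2 & E & HE0 & _); discriminate.
  - destruct HP as (D & I1 & I2 & E & HE0 & _); discriminate.
  - destruct HP as (D & I1 & I2 & E & HE0 & _); discriminate.
  - destruct HP as (D & I1 & I2 & E & HE0 & _); discriminate.
  - destruct HP as (D & I1 & I2 & E & HE0 & _); discriminate.
Qed.

Lemma PI_step (Sigma : Type) (x : lab Sigma) : step PI [x] [x] tI.
Proof. exact (st_pref [ALam Sigma 0] [ALam Sigma 0] tI (fun _ => x)). Qed.
Lemma Pd_step (Sigma : Type) (x : lab Sigma) : step Pd [] [x; x] td.
Proof. exact (st_pref [] [ALam Sigma 0; ALam Sigma 0] td (fun _ => x)). Qed.
Lemma Pe_step (Sigma : Type) (x : lab Sigma) : step Pe [x; x] [] te.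
Proof. exact (st_pref [ALam Sigma 0; ALam Sigma 0] [] te (fun _ => x)). Qed.


Lemma I_prog (Sigma : Type) (X : term Sigma) x : (X = tI \/ X = PI) -> step X [x] [x] tI.
Proof. intros [-> | ->]; [apply st_rec|]; apply PI_step. Qed.
Lemma D_prog (Sigma : Type) (X : term Sigma) x : (X = td \/ X = Pd) -> step X [] [x; x] td.
Proof. intros [-> | ->]; [apply st_rec|]; apply Pd_step. Qed.
Lemma E_prog (Sigma : Type) (X : term Sigma) x : (X = te \/ X = Pe) -> step X [x; x] [] te.
Proof. intros [-> | ->]; [apply st_rec|]; apply Pe_step. Qed.

Lemma bisim_of (Sigma : Type) (A B : term Sigma -> Prop) :
  (forall P a b Q, step P a b Q -> A P -> (exists x, a = [x] /\ b = [x]) /\ A Q) ->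
  (forall P x, A P -> exists Q, step P [x] [x] Q /\ A Q) ->
  (forall P a b Q, step P a b Q -> B P -> (exists x, a = [x] /\ b = [x]) /\ B Q) ->
  (forall P x, B P -> exists Q, step P [x] [x] Q /\ B Q) ->
  forall P Q, A P -> B Q -> bisim P Q.
Proof.
  intros clA prA clB prB P Q HP HQ.
  exists (fun P Q => A P /\ B Q). split; [auto|].
  intros P0 Q0 [H1 H2]. split.
  - intros a b P' S. destruct (clA _ _ _ _ S H1) as [[x [-> ->]] HP'].
    destruct (prB _ x H2) as [Q' [S' HQ']]. eauto.
  - intros a b Q' S. destruct (clB _ _ _ _ S H2) as [[x [-> ->]] HQ'].
    destruct (prA _ x H1) as [P' [S' HP']]. eauto.
Qed.

Lemma AI_cl (Sigma : Type) : forall (P : term Sigma) a b Q, step P a b Q ->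
  AI P -> (exists x, a = [x] /\ b = [x]) /\ AI Q.
Proof.
  intros P a b Q S HP. destruct (I_cl _ _ _ _ _ S HP) as (x & -> & -> & HQ). eauto.
Qed.

Lemma AI_prog (Sigma : Type) : forall (P : term Sigma) x, AI P -> exists Q, step P [x] [x] Q /\ AI Q.
Proof. intros P x HP. exists tI. split; [apply I_prog; exact HP | left; reflexivity]. Qed.

Lemma AC1_prog (Sigma : Type) : forall (P : term Sigma) x, AC1 P -> exists Q, step P [x] [x] Q /\ AC1 Q.
Proof.
  intros P x (D & I1 & I2 & E & -> & HD & HI1 & HI2 & HE).
  exists (Seq (Ten td tI) (Ten tI te)). split.
  - apply st_cut with (c := [x; x; x]).
    + exact (st_ten (D_prog _ _ x HD) (I_prog _ _ x HI1)).
    + exact (st_ten (I_prog _ _ x HI2) (E_prog _ _ x HE)).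
  - exists td, tI, tI, te; repeat split; left; reflexivity.
Qed.

Lemma AC2_prog (Sigma : Type) : forall (P : term Sigma) x, AC2 P -> exists Q, step P [x] [x] Q /\ AC2 Q.
Proof.
  intros P x (I1 & D & E & I2 & -> & HD & HI1 & HI2 & HE).
  exists (Seq (Ten tI td) (Ten te tI)). split.
  - apply st_cut with (c := [x; x; x]).
    + exact (st_ten (I_prog _ _ x HI1) (D_prog _ _ x HD)).
    + exact (st_ten (E_prog _ _ x HE) (I_prog _ _ x HI2)).
  - exists tI, td, te, tI; repeat split; left; reflexivity.
Qed.

Theorem mainTheorem4 (Sigma : Type) :
  bisim (Seq (Ten (@td Sigma) tI) (Ten tI te)) tI /\
  bisim (@tI Sigma) (Seq (Ten tI td) (Ten te tI)).
Proof.
  split.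
  - apply (@bisim_of Sigma _ _ (AC1_cl Sigma) (AC1_prog Sigma) (AI_cl Sigma) (AI_prog Sigma)).
    + exists td, tI, tI, te; repeat split; left; reflexivity.
    + left; reflexivity.
  - apply (@bisim_of Sigma _ _ (AI_cl Sigma) (AI_prog Sigma) (AC2_cl Sigma) (AC2_prog Sigma)).
    + left; reflexivity.
    + exists tI, td, te, tI; repeat split; left; reflexivity.
Qed.
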